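(* Let $G$ be a finite group and $X$ a finite $G$-poset. Let $\alpha:X'/G\to(X/G)'$ be defined by $\alpha(\overline{(x_0<x_1<\dots<x_n)})=(\overline{x_0}<\overline{x_1}<\dots<\overline{x_n})$. Then $\alpha$ is injective if and only if $X$ satisfies property (B). Moreover, if $\alpha$ is injective then it is an isomorphism of posets.
   Context: A finite $G$-poset is a finite poset with a right action of $G$ by order-preserving maps. $X'$ denotes the poset of non-empty chains of $X$ ordered by inclusion, with $G$ acting componentwise. For a $G$-poset $Y$, $Y/G$ is the orbit poset: $\overline{y}\le\overline{z}$ iff there exist representatives $y_1\le z_1$. $X$ satisfies property (B) if the simplicial complex $\mathcal{K}(X)$ of non-empty chains of $X$ does, i.e. whenever $\{v_0,\dots,v_n\}$ and $\{v_0^{g_0},\dots,v_n^{g_n}\}$ are both chains of $X$ with $g_i\in G$, there exists $g\in G$ with $v_i^{g_i}=v_i^g$ for all $i$. *)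

(* Defs.v *)
From mathcomp Require Import all_boot all_order all_fingroup.
Set Implicit Arguments.
Unset Strict Implicit.
Unset Printing Implicit Defensive.
Import Order.Theory.

Definition chainb (U : finType) (le : rel U) (A : {set U}) : bool :=
  (A != set0) && [forall x in A, forall y in A, le x y || le y x].

Section GPoset.
Variables (gT : finGroupType) (d : Order.disp_t) (T : finPOrderType d)
          (to : {action gT &-> T}).
Local Open Scope order_scope.

Definition chainsX : {set {set T}} := [set A | chainb (fun x y : T => x <= y) A].

Definition orbX (x : T) : {set T} := orbit to [set: gT] x.
Definition XG : {set {set T}} := [set orbX x | x : T].
Definition leXG (a b : {set T}) : bool := [exists x in a, exists y in b, x <= y].

Definition orbC (A : {set T}) : {set {set T}} := orbit (to^*)%act [set: gT] A.
Definition XpG : {set {set {set T}}} := [set orbC A | A in chainsX].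
Definition leXpG (c e : {set {set T}}) : bool :=
  [exists A in c, exists B in e, A \subset B].

Definition chainsXG : {set {set {set T}}} :=
  [set C : {set {set T}} | (C \subset XG) && chainb leXG C].

(* alpha : X'/G -> (X/G)', class of (x0<...<xn) |-> {xbar0,...,xbarn},
   computed on a chosen representative of the class *)
Definition alpha0 (A : {set T}) : {set {set T}} := orbX @: A.
Definition alpha (c : {set {set T}}) : {set {set T}} :=
  alpha0 (odflt set0 [pick A in c]).

Definition propB : Prop :=
  forall (A : {set T}) (f : T -> gT),
    A \in chainsX -> [set to v (f v) | v in A] \in chainsX ->
    exists g : gT, forall v, v \in A -> to v (f v) = to v g.

End GPoset.

(* Main.v *)
Require Import Defs.
From mathcomp Require Import all_boot all_order all_fingroup.
Set Implicit Arguments.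
Unset Strict Implicit.
Unset Printing Implicit Defensive.
Import Order.Theory.

Section Aux.
Variables (gT : finGroupType) (d : Order.disp_t) (T : finPOrderType d)
          (to : {action gT &-> T}).
Hypothesis Hmono : forall (g : gT) (x y : T), (x <= y)%O -> (to x g <= to y g)%O.
Local Open Scope order_scope.

Lemma orbX_act x g : orbX to (to x g) = orbX to x.
Proof. by rewrite /orbX orbit_act ?inE. Qed.

Lemma orbX_memP x y : reflect (exists g, to x g = y) (y \in orbX to x).
Proof.
by apply: (iffP orbitP) => [[g _ <-]|[g <-]]; exists g; rewrite ?inE.
Qed.

Lemma orbX_eq x y : y \in orbX to x -> orbX to y = orbX to x.
Proof. by move=> H; apply/orbit_eqP. Qed.

Lemma ltact x y g : x < y -> to x g < to y g.
Proof.
rewrite !lt_neqAle => /andP[nxy lxy]; rewrite Hmono // andbT.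
by apply: contra nxy => /eqP /act_inj ->.
Qed.

Lemma no_lt_orbit x g : ~ (x < to x g).
Proof.
move=> H.
have K : forall n, x < to x (g ^+ n.+1)%g.
  elim=> [|n IH]; first by rewrite expg1.
  rewrite expgSr actM; apply: lt_trans H _; exact: ltact.
have := K (#[g]%g.-1); rewrite prednK ?order_gt0 // expg_order act1 ltxx.
by [].
Qed.

Lemma chainsXP A : reflect (A != set0 /\ {in A &, forall x y, (x <= y) || (y <= x)})
   (A \in chainsX T).
Proof.
rewrite inE /chainb; apply: (iffP andP) => [[H1 /forallP H2]|[H1 H2]]; split => //.
  move=> x y xA yA; move: (H2 x); rewrite xA /= => /forallP/(_ y); by rewrite yA.
by apply/forallP => x; apply/implyP => xA; apply/forallP => y; apply/implyP => yA; apply: H2.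
Qed.

Lemma chain_orb_inj A x y : A \in chainsX T -> x \in A -> y \in A ->
  orbX to x = orbX to y -> x = y.
Proof.
move=> /chainsXP[_ HA] xA yA E.
have : y \in orbX to x by rewrite E; exact: orbit_refl.
move=> /orbX_memP[g Hg].
case: (eqVneq x y) => // nxy; exfalso.
have := HA _ _ xA yA; rewrite !le_eqVlt (negPf nxy) eq_sym (negPf nxy) /= -Hg.
case/orP => H; first exact: (no_lt_orbit H).
apply: (@no_lt_orbit (to x g) g^-1)%g; by rewrite actK.
Qed.


Lemma orbC_memP A B : reflect (exists g, B = setact to A g) (B \in Defs.orbC to A).
Proof.
by apply: (iffP orbitP) => [[g _ <-]|[g ->]]; exists g; rewrite ?inE.
Qed.

Lemma orbC_eq A B : B \in Defs.orbC to A -> Defs.orbC to B = Defs.orbC to A.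
Proof. by move=> H; apply/orbit_eqP. Qed.

Lemma orbC_refl A : A \in Defs.orbC to A.
Proof. exact: orbit_refl. Qed.

Lemma alpha0_act A g : alpha0 to (setact to A g) = alpha0 to A.
Proof.
rewrite /alpha0 setactE -imset_comp; apply: eq_imset => x /=; exact: orbX_act.
Qed.

Lemma chain_act A g : A \in chainsX T -> setact to A g \in chainsX T.
Proof.
move=> /chainsXP[ne HA]; apply/chainsXP; split.
  by rewrite setactE imset_eq0.
rewrite setactE => x y /imsetP[x' x'A ->] /imsetP[y' y'A ->].
by case/orP: (HA _ _ x'A y'A) => H; apply/orP; [left|right]; apply: Hmono.
Qed.

Lemma alpha_orbC A : alpha to (Defs.orbC to A) = alpha0 to A.
Proof.
rewrite /alpha; case: pickP => [B /orbC_memP[g ->]|H] /=; first exact: alpha0_act.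
by have := H A; rewrite orbC_refl.
Qed.

Lemma matchf A B : alpha0 to A \subset alpha0 to B ->
  exists f : T -> gT, {in A, forall v, to v (f v) \in B}.
Proof.
move=> sAB.
exists (fun v => if [pick g | to v g \in B] is Some g then g else 1%g).
move=> v vA; case: pickP => [g //|H].
have : orbX to v \in alpha0 to B by apply: (subsetP sAB); apply: imset_f.
case/imsetP => w wB E.
have : v \in orbX to w by rewrite -E; exact: orbit_refl.
rewrite /orbX orbit_sym => /orbX_memP[g Hg].
by have := H g; rewrite Hg wB.
Qed.

Lemma match_eq A B (f : T -> gT) : B \in chainsX T ->
  alpha0 to A = alpha0 to B -> {in A, forall v, to v (f v) \in B} ->
  [set to v (f v) | v in A] = B.
Proof.
move=> Bc E Hf; apply/eqP; rewrite eqEsubset; apply/andP; split.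
  by apply/subsetP => w /imsetP[v vA ->]; apply: Hf.
apply/subsetP => w wB.
have : orbX to w \in alpha0 to A by rewrite E; apply: imset_f.
case/imsetP => v vA Ev.
have -> : w = to v (f v); last by apply: imset_f.
apply: (chain_orb_inj Bc wB (Hf _ vA)); by rewrite orbX_act.
Qed.


Lemma XpGP c : reflect (exists2 A, A \in chainsX T & c = Defs.orbC to A) (c \in XpG to).
Proof. by apply: (iffP imsetP) => [[A HA ->]|[A HA ->]]; exists A. Qed.

Lemma B_inj : propB to -> {in XpG to &, injective (alpha to)}.
Proof.
move=> PB c e /XpGP[A Ac ->] /XpGP[B Bc ->]; rewrite !alpha_orbC => E.
have [f Hf] : exists f : T -> gT, {in A, forall v, to v (f v) \in B}.
  by apply: matchf; rewrite E subxx.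
have SB := match_eq Bc E Hf.
have [g Hg] : exists g : gT, forall v, v \in A -> to v (f v) = to v g.
  by apply: PB => //; rewrite SB.
have : B \in Defs.orbC to A.
  apply/orbC_memP; exists g; rewrite -SB setactE; apply: eq_in_imset => v vA.
  exact: Hg.
by move/orbC_eq.
Qed.

Lemma inj_B : {in XpG to &, injective (alpha to)} -> propB to.
Proof.
move=> Inj A f Ac Sc.
set S := [set to v (f v) | v in A] in Sc *.
have E : alpha0 to S = alpha0 to A.
  by rewrite /alpha0 /S -imset_comp; apply: eq_imset => v /=; rewrite orbX_act.
have : Defs.orbC to S = Defs.orbC to A.
  apply: Inj; rewrite ?alpha_orbC //; apply/XpGP; by [exists S | exists A].
move=> EO; have : S \in Defs.orbC to A by rewrite -EO; exact: orbC_refl.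
case/orbC_memP => g Sg; exists g => v vA.
apply: (chain_orb_inj Sc); first by apply: imset_f.
  by rewrite Sg setactE; apply: imset_f.
by rewrite !orbX_act.
Qed.


Lemma chainbP (U : finType) (le : rel U) A :
  reflect (A != set0 /\ {in A &, forall x y, le x y || le y x}) (chainb le A).
Proof.
rewrite /chainb; apply: (iffP andP) => [[H1 /forallP H2]|[H1 H2]]; split => //.
  move=> x y xA yA; move: (H2 x); rewrite xA /= => /forallP/(_ y); by rewrite yA.
by apply/forallP => x; apply/implyP => xA; apply/forallP => y; apply/implyP => yA; apply: H2.
Qed.

Lemma leXGP (a b : {set T}) :
  reflect (exists2 x, x \in a & exists2 y, y \in b & x <= y) (leXG a b).
Proof.
apply: (iffP existsP) => [[x /andP[xa /existsP[y /andP[yb le]]]]|[x xa [y yb le]]].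
  by exists x => //; exists y.
by exists x; rewrite xa; apply/existsP; exists y; rewrite yb.
Qed.

Lemma transl_up p q u : p <= q -> u \in orbX to p -> exists2 w, w \in orbX to q & u <= w.
Proof.
move=> le /orbX_memP[g <-]; exists (to q g); last exact: Hmono.
by apply/orbX_memP; exists g.
Qed.

Lemma transl_down p q z : p <= q -> z \in orbX to q -> exists2 w, w \in orbX to p & w <= z.
Proof.
move=> le /orbX_memP[g <-]; exists (to p g); last exact: Hmono.
by apply/orbX_memP; exists g.
Qed.

Lemma XGP a : reflect (exists t, a = orbX to t) (a \in XG to).
Proof. by apply: (iffP imsetP) => [[t _ ->]|[t ->]]; exists t. Qed.

Lemma maxC (C : {set {set T}}) : C \subset XG to -> C != set0 ->
  {in C &, forall a b, leXG a b || leXG b a} ->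
  exists x, orbX to x \in C /\ {in C, forall a, leXG a (orbX to x)}.
Proof.
move=> sub ne comp.
set U := \bigcup_(a in C) a.
have [a0 a0C] : exists a0, a0 \in C.
  by case: (set_0Vmem C) ne => [->|[a0 Ha]]; [rewrite eqxx | exists a0].
have [t0 Et0] : exists t, a0 = orbX to t by apply/XGP; exact: (subsetP sub).
have t0U : t0 \in U by apply/bigcupP; exists a0 => //; rewrite Et0; exact: orbit_refl.
pose rk (y : T) := #|[set z | z < y]|.
case: (@arg_maxnP _ t0 (mem U) rk t0U) => x xU Hmax.
have nlt : forall w, w \in U -> ~ x < w.
  move=> w wU lt; have := Hmax w wU; apply/negP; rewrite -ltnNge.
  rewrite /rk; apply: proper_card; apply/properP; split.
    by apply/subsetP => z; rewrite !inE => zx; apply: lt_trans zx lt.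
  by exists x; rewrite !inE ?ltxx.
have [a1 a1C xa1] : exists2 a1, a1 \in C & x \in a1 by apply/bigcupP.
have [t1 Et1] : exists t, a1 = orbX to t by apply/XGP; exact: (subsetP sub).
have mC : orbX to x \in C by have -> : orbX to x = a1 by rewrite Et1; apply: orbX_eq; rewrite -Et1.
exists x; split => // a aC.
case/orP: (comp _ _ aC mC) => // /leXGP[p pa [q qx le]].
have [t Et] : exists t, a = orbX to t by apply/XGP; exact: (subsetP sub).
have xp : x \in orbX to p by rewrite /orbX orbit_sym.
have [w wq xw] := transl_up le xp.
have wt : w \in orbX to t.
  by rewrite -(orbX_eq (x := t) (y := q)) // -Et.
have wU : w \in U by apply/bigcupP; exists a => //; rewrite Et.
have exw : x = w.
  move: xw; rewrite le_eqVlt => /orP[/eqP //|lt]; exfalso; exact: (nlt w wU lt).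
rewrite Et -(orbX_eq wt) -exw.
apply/leXGP; exists x; first exact: orbit_refl.
by exists x; [exact: orbit_refl|].
Qed.


Lemma build n (C : {set {set T}}) : #|C| = n -> C \subset XG to ->
  {in C &, forall a b, leXG a b || leXG b a} ->
  forall z, {in C, forall a, leXG a (orbX to z)} ->
  exists A : {set T}, [/\ {in A &, forall x y, (x <= y) || (y <= x)},
                         orbX to @: A = C & {in A, forall v, v <= z}].
Proof.
elim: n C => [|n IH] C cardC sub comp z Hz.
  exists set0; split; first by move=> x y; rewrite inE.
    rewrite (cards0_eq cardC); apply/setP => a; rewrite inE; apply/imsetP; by case=> v; rewrite inE.
  by move=> v; rewrite inE.
have ne : C != set0 by rewrite -card_gt0 cardC.
have [x [mC Hm]] := maxC sub ne comp.
have /leXGP[p px [q qz le]] := Hz _ mC.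
have zq : z \in orbX to q by rewrite /orbX orbit_sym.
have [w wp wz] := transl_down le zq.
have Ew : orbX to w = orbX to x by rewrite (orbX_eq wp) (orbX_eq px).
have h1 : #|C :\ orbX to x| = n.
  by move: cardC; rewrite (cardsD1 (orbX to x)) mC add1n => -[].
have h2 : C :\ orbX to x \subset XG to by exact: subset_trans (subsetDl _ _) sub.
have h3 : {in C :\ orbX to x &, forall a b, leXG a b || leXG b a}.
  by move=> a b /setD1P[_ aC] /setD1P[_ bC]; apply: comp.
have h4 : {in C :\ orbX to x, forall a, leXG a (orbX to w)}.
  by move=> a /setD1P[_ aC]; rewrite Ew; apply: Hm.
have [A' [c' i' b']] := IH _ h1 h2 h3 w h4.
exists (w |: A'); split.
- move=> u v /setU1P[->|uA] /setU1P[->|vA]; rewrite ?lexx //.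
  + by rewrite b' ?orbT.
  + by rewrite b' ?orbT.
  + exact: c'.
- by rewrite imsetU1 i' Ew setD1K.
- move=> v /setU1P[->//|vA]; exact: le_trans (b' _ vA) wz.
Qed.

Lemma surj (C : {set {set T}}) : C \in chainsXG to ->
  exists2 A, A \in chainsX T & alpha0 to A = C.
Proof.
rewrite inE => /andP[sub /chainbP[ne comp]].
have [x [mC Hm]] := maxC sub ne comp.
have [A [cA iA _]] := build (erefl _) sub comp Hm.
exists A => //; apply/chainsXP; split => //.
by apply: contra ne => /eqP A0; rewrite -iA A0 imset0.
Qed.

Lemma alpha0_chain A : A \in chainsX T -> alpha0 to A \in chainsXG to.
Proof.
move=> /chainsXP[ne cA]; rewrite inE; apply/andP; split.
  by apply/subsetP => a /imsetP[x _ ->]; apply/XGP; exists x.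
apply/chainbP; split.
  by rewrite /alpha0 imset_eq0.
move=> a b /imsetP[x xA ->] /imsetP[y yA ->].
case/orP: (cA _ _ xA yA) => le; apply/orP; [left|right]; apply/leXGP.
  by exists x; [exact: orbit_refl|exists y => //; exact: orbit_refl].
by exists y; [exact: orbit_refl|exists x => //; exact: orbit_refl].
Qed.

Lemma order_part : propB to ->
  {in XpG to &, forall c e, leXpG c e = (alpha to c \subset alpha to e)}.
Proof.
move=> PB c e /XpGP[A Ac ->] /XpGP[B Bc ->]; rewrite !alpha_orbC.
apply/idP/idP.
  case/existsP => A1 /andP[A1c /existsP[B1 /andP[B1e sAB]]].
  have [g EA] := orbC_memP _ _ A1c.
  have [h EB] := orbC_memP _ _ B1e.
  rewrite -(alpha0_act A g) -(alpha0_act B h) -EA -EB.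
  exact: imsetS.
move=> sub.
have [f Hf] := matchf sub.
set S := [set to v (f v) | v in A].
have SB : S \subset B by apply/subsetP => w /imsetP[v vA ->]; apply: Hf.
have Sc : S \in chainsX T.
  move/chainsXP: Ac => [neA _]; move/chainsXP: Bc => [_ cB].
  apply/chainsXP; split; first by rewrite imset_eq0.
  by move=> x y xS yS; apply: cB; apply: (subsetP SB).
have [g Hg] := PB A f Ac Sc.
apply/existsP; exists S; apply/andP; split.
  apply/orbC_memP; exists g; rewrite setactE; apply: eq_in_imset => v vA; exact: Hg.
by apply/existsP; exists B; rewrite SB orbC_refl.
Qed.

End Aux.

Theorem proposition2p9 (gT : finGroupType) (d : Order.disp_t)
  (T : finPOrderType d) (to : {action gT &-> T})
  (Hmono : forall (g : gT) (x y : T), (x <= y)%O -> (to x g <= to y g)%O) :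
  ({in XpG to &, injective (alpha to)} <-> propB to) /\
  ({in XpG to &, injective (alpha to)} ->
     alpha to @: XpG to = chainsXG to /\
     {in XpG to &, forall c e, leXpG c e = (alpha to c \subset alpha to e)}).
Proof.
have IB := inj_B Hmono; have BI := B_inj Hmono.
split; first by split; [exact: IB | exact: BI].
move=> Inj; have PB := IB Inj; split; last first.
  exact: order_part PB.
apply/setP => C; apply/imsetP/idP => [[c /XpGP[A Ac ->] ->]|HC].
  rewrite alpha_orbC; exact: alpha0_chain.
have [A Ac E] := surj Hmono HC; exists (Defs.orbC to A).
  by apply/XpGP; exists A.
by rewrite alpha_orbC E.
Qed.
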